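(* Let $(\Sigma,\partial\Sigma)$ be a weighted metric graph with boundary. For all $\omega=(f_e\,d't_e)\in\mathcal A^{1,0}(\Sigma,\partial\Sigma)$ and $\eta=(g_e\,d''t_e)\in\mathcal A^{0,1}(\Sigma,\partial\Sigma)$ we have $\int_\Sigma d''\omega=\int_{\partial\Sigma}\omega$ and $\int_\Sigma d'\eta=\int_{\partial\Sigma}\eta$.
   Context: A weighted metric graph with boundary $(\Sigma,\partial\Sigma)$: finite multigraph without loop edges, with for each oriented edge $e$ (tail $e^-$, head $e^+$) a length $\ell(e)>0$, parametrization $t_e\colon[0,\ell(e)]\to e$, $t_e(0)=e^-$, $t_{\bar e}(x)=t_e(\ell(e)-x)$, weight $w(e)=w(\bar e)\in\mathbb Z_{>0}$, boundary $\partial\Sigma\subset V(\Sigma)$. Smooth $(1,0)$-forms $(f_e\,d't_e)$ (resp. $(0,1)$-forms $(g_e\,d''t_e)$): families of smooth functions $f_e$ on edges (smooth meaning $f_e\circ t_e$ smooth on the closed interval) with $f_{\bar e}=-f_e$, such that at each vertex $v\notin\partial\Sigma$: if $v$ has valency 1, $f_e$ vanishes near $v$; if $v$ has valency 2 with outgoing edges $e_1,e_2$, then $w(e_1)^{n+1}\frac{d^nf_{e_1}}{dt_{e_1}^n}(v)=-(-1)^nw(e_2)^{n+1}\frac{d^nf_{e_2}}{dt_{e_2}^n}(v)$ for all $n\ge 0$; if valency $\ge3$, $\sum_{e^-=v}w(e)f_e(v)=0$. Operators: $d''(f_e\,d't_e)=(-\frac{df_e}{dt_e}\,d't_ed''t_e)$,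 $d'(g_e\,d''t_e)=(\frac{dg_e}{dt_e}\,d't_ed''t_e)$, where $\frac{d}{dt_e}$ is derivative of the function composed with $t_e$. Integrals: $\int_\Sigma(f_e\,d't_ed''t_e)=\frac12\sum_{e\text{ oriented}}w(e)\int_0^{\ell(e)}f_e\circ t_e(x)\,dx$; $\int_{\partial\Sigma}(f_e\,d't_e)=\sum_{v\in\partial\Sigma}\sum_{e^-=v}w(e)f_e(v)$; $\int_{\partial\Sigma}(g_e\,d''t_e)=\sum_{v\in\partial\Sigma}\sum_{e^+=v}w(e)g_e(v)$. *)

(* Defs.v *)
From Stdlib Require Import Reals.
From Coquelicot Require Import Coquelicot.
From mathcomp Require Import ssreflect ssrbool ssrfun eqtype ssrnat seq choice fintype.

Set Implicit Arguments.
Unset Strict Implicit.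
Unset Printing Implicit Defensive.

Local Open Scope R_scope.

Definition fsumR (T : finType) (P : pred T) (f : T -> R) : R :=
  foldr Rplus 0 (map f (filter P (enum T))).

(* A weighted metric graph with boundary.  Oriented edges form the finite type
   [E]; [rev e] is the reversed edge \bar e; [tail e] = e^-, head e^+ = tail (rev e). *)
Record wmgraph := WMGraph {
  V : finType;
  E : finType;
  tail : E -> V;
  rev : E -> E;
  len : E -> R;
  wt : E -> nat;
  bdry : pred V;
  rev_invol : forall e, rev (rev e) = e;
  no_loop : forall e, tail (rev e) <> tail e;
  len_pos : forall e, 0 < len e;
  len_rev : forall e, len (rev e) = len e;
  wt_pos : forall e, (0 < wt e)%nat;
  wt_rev : forall e, wt (rev e) = wt e
}.

Definition head (G : wmgraph) (e : E G) : V G := tail (rev e).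

Definition valency (G : wmgraph) (v : V G) : nat := #|[pred e : E G | tail e == v]|.

Definition is_derive_within (a b : R) (f : R -> R) (x l : R) : Prop :=
  filterlim (fun y => (f y - f x) / (y - x))
            (within (fun y => a <= y <= b /\ y <> x) (locally x)) (locally l).

(* D 0 is smooth on the closed interval [a,b] with n-th derivative D n
   (derivatives taken within [a,b], i.e. one-sided at the end points). *)
Definition smooth_on_with (a b : R) (D : nat -> R -> R) : Prop :=
  forall n x, a <= x <= b -> is_derive_within a b (D n) x (D (S n) x).

(* A family of functions (f_e), given through f_e o t_e = F e 0 on [0, l(e)]
   together with its derivatives F e n = d^n f_e / d t_e^n, satisfying the
   conditions defining smooth (1,0)-forms (resp. (0,1)-forms, the conditions
   being identical). *)
Definition smooth_form (G : wmgraph) (F : E G -> nat -> R -> R) : Prop :=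
  (forall e, smooth_on_with 0 (len e) (F e)) /\
  (forall e x, 0 <= x <= len e -> F (rev e) 0%nat x = - F e 0%nat (len e - x)) /\
  (forall v : V G, ~~ bdry v ->
     (valency v = 1%nat ->
        forall e, tail e = v ->
          exists eps, 0 < eps /\ forall x, 0 <= x < eps -> x <= len e -> F e 0%nat x = 0) /\
     (valency v = 2%nat ->
        forall e1 e2, tail e1 = v -> tail e2 = v -> e1 <> e2 ->
          forall n : nat,
            (INR (wt e1)) ^ (S n) * F e1 n 0 =
            - ((-1) ^ n * (INR (wt e2)) ^ (S n) * F e2 n 0)) /\
     ((3 <= valency v)%nat ->
        fsumR [pred e : E G | tail e == v] (fun e => INR (wt e) * F e 0%nat 0) = 0)).

(* int_Sigma of the (1,1)-form (h_e d't_e d''t_e), with h_e o t_e = H e. *)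
Definition int_Sigma (G : wmgraph) (H : E G -> R -> R) : R :=
  / 2 * fsumR predT (fun e => INR (wt e) * RInt (H e) 0 (len e)).

(* d''(f_e d't_e) = (- df_e/dt_e d't_e d''t_e) *)
Definition dbar_10 (G : wmgraph) (F : E G -> nat -> R -> R) : E G -> R -> R :=
  fun e x => - F e 1%nat x.

(* d'(g_e d''t_e) = (dg_e/dt_e d't_e d''t_e) *)
Definition d_01 (G : wmgraph) (F : E G -> nat -> R -> R) : E G -> R -> R :=
  fun e x => F e 1%nat x.

(* int_{dSigma} (f_e d't_e) = sum_{v in dSigma} sum_{e^- = v} w(e) f_e(v) *)
Definition int_bdry_10 (G : wmgraph) (F : E G -> nat -> R -> R) : R :=
  fsumR (@bdry G) (fun v => fsumR [pred e : E G | tail e == v]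
                                   (fun e => INR (wt e) * F e 0%nat 0)).

(* int_{dSigma} (g_e d''t_e) = sum_{v in dSigma} sum_{e^+ = v} w(e) g_e(v) *)
Definition int_bdry_01 (G : wmgraph) (F : E G -> nat -> R -> R) : R :=
  fsumR (@bdry G) (fun v => fsumR [pred e : E G | head e == v]
                                   (fun e => INR (wt e) * F e 0%nat (len e))).

(* Main.v *)
From HB Require Import structures.
Require Import Defs.
From Stdlib Require Import Reals Lra.
From Coquelicot Require Import Coquelicot.
From mathcomp Require Import ssreflect ssrbool ssrfun eqtype ssrnat seq choice fintype bigop.
Local Open Scope R_scope.

Lemma Rplus_assoc' : associative Rplus. Proof. move=> *; ring. Qed.
HB.instance Definition _ := Monoid.isComLaw.Build R 0 Rplus Rplus_assoc' Rplus_comm Rplus_0_l.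

Lemma fsumE (T : finType) (P : pred T) f : fsumR P f = \big[Rplus/0]_(i | P i) f i.
Proof.
rewrite /fsumR foldrE big_map big_filter.
rewrite big_enum_cond.
by apply: eq_bigl.
Qed.

Lemma vertex_zero (G : wmgraph) (F : E G -> nat -> R -> R) : smooth_form F ->
  forall v : V G, ~~ bdry v -> \big[Rplus/0]_(e | tail e == v) (INR (wt e) * F e 0%nat 0) = 0.
Proof.
move=> [_ [_ Hv]] v Hb.
have [H1 [H2 H3]] := Hv v Hb.
case Hval: (valency v) => [|[|[|k]]].
- move: Hval; rewrite /valency => /card0_eq H0.
  apply: big_pred0 => e; have := H0 e; rewrite !inE /=. done.
- apply: big1 => e /eqP He.
  have [eps [Heps Hz]] := H1 Hval e He.
  rewrite Hz; [ring|lra|]. have := len_pos e; lra.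
- have : (1 < valency v)%N by rewrite Hval.
  move=> /card_gt1P [x [y [Hx Hy Hxy]]].
  rewrite !inE /= in Hx Hy.
  rewrite (bigD1 x) //= (bigD1 y) /=; last by rewrite Hy eq_sym Hxy.
  rewrite big_pred0; last first.
    move=> e /=.
    have := Hval; rewrite /valency (cardD1 x) (cardD1 y) !inE /= Hx Hy eq_sym Hxy /=.
    rewrite !add1n => /eqP; rewrite !eqSS => /eqP /card0_eq /(_ e); rewrite !inE /=.
    by case: (tail e == v); case: (e != x); case: (e != y).
  have := H2 Hval x y (eqP Hx) (eqP Hy) (fun E => (negP Hxy) (introT eqP E)) 0%nat.
  rewrite /= !Rmult_1_r Rmult_1_l. lra.
- have := H3 ltac:(by rewrite Hval). by rewrite fsumE.
Qed.

Lemma ball_R (x d y : R) : ball x d y <-> Rabs (y - x) < d.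
Proof. rewrite /ball /= /AbsRing_ball /abs /minus /plus /opp /=. tauto. Qed.

Lemma within_ed a b f x l : is_derive_within a b f x l ->
  forall eps, 0 < eps -> exists d, 0 < d /\ forall y, Rabs (y - x) < d -> a <= y <= b ->
    Rabs (f y - f x - l * (y - x)) <= eps * Rabs (y - x).
Proof.
move=> H eps He.
have := proj1 (filterlim_locally _ _) H (mkposreal eps He).
move=> [[d Hd] Hl]; exists d; split => // y Hy Hab.
case: (Req_dec y x) => [->|Hne].
  rewrite !Rminus_eq_0 Rmult_0_r Rminus_0_r Rabs_R0 Rmult_0_r; lra.
have := Hl y (proj2 (ball_R _ _ _) Hy) (conj Hab Hne).
move/ball_R => /= H1.
have Hne' : y - x <> 0 by lra.
have -> : f y - f x - l * (y - x) = ((f y - f x) / (y - x) - l) * (y - x) by field.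
rewrite Rabs_mult; apply Rmult_le_compat_r; [apply Rabs_pos|lra].
Qed.

Arguments within_ed {a b f x l}.

Section FTC.
Variables (L : R) (F0 F1 F2 : R -> R).
Hypothesis HL : 0 < L.
Hypothesis D1 : forall x, 0 <= x <= L -> is_derive_within 0 L F0 x (F1 x).
Hypothesis D2 : forall x, 0 <= x <= L -> is_derive_within 0 L F1 x (F2 x).

Definition clamp y := Rmax 0 (Rmin L y).

Ltac clt := have := HL; rewrite /clamp /Rmax /Rmin; repeat destruct Rle_dec; try split_Rabs; lra.

Lemma clamp_in y : 0 <= clamp y <= L. Proof. clt. Qed.
Lemma clamp_id y : 0 <= y <= L -> clamp y = y. Proof. move=> ?; clt. Qed.
Lemma clamp_lip x y : Rabs (clamp y - clamp x) <= Rabs (y - x). Proof. clt. Qed.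
Lemma clamp_dist x y : 0 <= x <= L -> Rabs (y - clamp y) <= Rabs (y - x). Proof. move=> ?; clt. Qed.
Lemma clamp_out x : ~ (0 <= x <= L) -> exists d, 0 < d /\ forall y, Rabs (y - x) < d -> clamp y = clamp x.
Proof.
move=> Hx. case: (Rlt_le_dec x 0) => Hx0.
  exists (- x); split; [lra|] => y Hy; clt.
exists (x - L); split; [lra|] => y Hy; clt.
Qed.

Lemma F1_cont x : 0 <= x <= L -> forall eps, 0 < eps -> exists d, 0 < d /\
  forall y, 0 <= y <= L -> Rabs (y - x) < d -> Rabs (F1 y - F1 x) < eps.
Proof.
move=> Hx eps He.
have [d [Hd Hb]] := within_ed (D2 x Hx) 1 Rlt_0_1.
set M := Rabs (F2 x) + 1.
have HM : 0 < M by rewrite /M; have := Rabs_pos (F2 x); lra.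
exists (Rmin d (eps / M)); split.
  apply Rmin_pos => //; apply Rdiv_lt_0_compat => //.
move=> y Hy Hyx.
have Hd' : Rabs (y - x) < d by have := Rmin_l d (eps / M); lra.
have He' : Rabs (y - x) < eps / M by have := Rmin_r d (eps / M); lra.
have := Hb y Hd' Hy.
have H3 := Rabs_triang (F1 y - F1 x - F2 x * (y - x)) (F2 x * (y - x)).
have E : F1 y - F1 x - F2 x * (y - x) + F2 x * (y - x) = F1 y - F1 x by ring.
rewrite E in H3.
rewrite Rabs_mult in H3.
have H4 : Rabs (y - x) * M < eps by apply/(Rlt_div_r _ _ _ HM).
rewrite /M in H4. move=> H5.
have := Rabs_pos (y - x). have := Rabs_pos (F2 x). nra.
Qed.

Definition gext y := F0 (clamp y) + F1 (clamp y) * (y - clamp y).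
Definition hext y := F1 (clamp y).

Lemma dpl_of_bound g x l :
  (forall eps, 0 < eps -> exists d, 0 < d /\ forall y, Rabs (y - x) < d ->
     Rabs (g y - g x - l * (y - x)) <= eps * Rabs (y - x)) ->
  derivable_pt_lim g x l.
Proof.
move=> H eps He.
have [d [Hd Hb]] := H (eps / 2) ltac:(lra).
exists (mkposreal d Hd) => hh Hh Hlt /=.
have := Hb (x + hh) ltac:(rewrite /=; have -> : x + hh - x = hh by ring; exact Hlt).
have -> : x + hh - x = hh by ring.
move=> H1.
have -> : (g (x + hh) - g x) / hh - l = (g (x + hh) - g x - l * hh) / hh by field.
rewrite Rabs_mult Rabs_inv.
have Hp : 0 < Rabs hh by apply Rabs_pos_lt.
apply (Rlt_div_l (Rabs _) eps (Rabs hh) Hp).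
have H2 := H1 Hlt. nra.
Qed.

Lemma gext_deriv x : derivable_pt_lim gext x (hext x).
Proof.
apply dpl_of_bound => eps He.
case: (Rle_dec 0 x) => H0; [case: (Rle_dec x L) => H1|].
- have Hx : 0 <= x <= L by lra.
  have [d1 [Hd1 Hb1]] := within_ed (D1 x Hx) (eps / 2) ltac:(lra).
  have [d2 [Hd2 Hb2]] := F1_cont x Hx (eps / 2) ltac:(lra).
  exists (Rmin d1 d2); split; first by apply Rmin_pos.
  move=> y Hy.
  have Hy1 : Rabs (y - x) < d1 by have := Rmin_l d1 d2; lra.
  have Hy2 : Rabs (y - x) < d2 by have := Rmin_r d1 d2; lra.
  have Hc := clamp_lip x y. rewrite (clamp_id x Hx) in Hc.
  have Hcd := clamp_dist x y Hx.
  have Hci := clamp_in y.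
  have B1 := Hb1 (clamp y) ltac:(lra) Hci.
  have B2 := Hb2 (clamp y) Hci ltac:(lra).
  rewrite /gext /hext (clamp_id x Hx).
  have -> : F0 (clamp y) + F1 (clamp y) * (y - clamp y) - (F0 x + F1 x * (x - x)) - F1 x * (y - x)
     = (F0 (clamp y) - F0 x - F1 x * (clamp y - x)) + (F1 (clamp y) - F1 x) * (y - clamp y) by ring.
  apply: Rle_trans; first apply Rabs_triang.
  rewrite Rabs_mult.
  have := Rabs_pos (F1 (clamp y) - F1 x). have := Rabs_pos (y - clamp y).
  have := Rabs_pos (clamp y - x). nra.
- have [d [Hd Hc]] := clamp_out x ltac:(lra).
  exists d; split => // y Hy. rewrite /gext /hext (Hc y Hy).
  have -> : F0 (clamp x) + F1 (clamp x) * (y - clamp x) - (F0 (clamp x) + F1 (clamp x) * (x - clamp x)) -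
    F1 (clamp x) * (y - x) = 0 by ring.
  rewrite Rabs_R0; have := Rabs_pos (y - x); nra.
- have [d [Hd Hc]] := clamp_out x ltac:(lra).
  exists d; split => // y Hy. rewrite /gext /hext (Hc y Hy).
  have -> : F0 (clamp x) + F1 (clamp x) * (y - clamp x) - (F0 (clamp x) + F1 (clamp x) * (x - clamp x)) -
    F1 (clamp x) * (y - x) = 0 by ring.
  rewrite Rabs_R0; have := Rabs_pos (y - x); nra.
Qed.

Lemma hext_cont x : continuous hext x.
Proof.
apply/filterlim_locally => eps.
have [d [Hd Hb]] := F1_cont (clamp x) (clamp_in x) eps (cond_pos eps).
exists (mkposreal d Hd) => y /ball_R /= Hy.
apply/ball_R. rewrite /hext.
apply Hb; first exact: clamp_in.
have := clamp_lip x y; lra.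
Qed.

Lemma FTC_main : is_RInt F1 0 L (F0 L - F0 0).
Proof.
have HL' := HL.
have H := is_RInt_derive gext hext 0 L (fun x _ => proj2 (is_derive_Reals _ _ _) (gext_deriv x))
   (fun x _ => hext_cont x).
have E1 : minus (gext L) (gext 0) = F0 L - F0 0.
  rewrite /minus /plus /opp /= /gext !clamp_id; first ring. all: try lra.
rewrite E1 in H.
apply: is_RInt_ext H => x.
rewrite Rmin_left ?Rmax_right; try lra.
move=> Hx; rewrite /hext clamp_id //; lra.
Qed.
End FTC.

Lemma RInt_F1 (G : wmgraph) (F : E G -> nat -> R -> R) : smooth_form F ->
  forall e, is_RInt (F e 1%nat) 0 (len e) (F e 0%nat (len e) - F e 0%nat 0).
Proof.
move=> [Hs _] e.
apply: (FTC_main (len e) (F e 0%nat) (F e 1%nat) (F e 2%nat) (len_pos e)).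
- by move=> x Hx; apply: Hs.
- by move=> x Hx; apply: Hs.
Qed.

Lemma big_opp (T : finType) (P : pred T) (f : T -> R) :
  \big[Rplus/0]_(i | P i) (- f i) = - \big[Rplus/0]_(i | P i) f i.
Proof.
apply: (big_rec2 (fun a b => a = - b)); first ring.
by move=> i a b _ ->; ring.
Qed.

Lemma antisym0 (G : wmgraph) (F : E G -> nat -> R -> R) : smooth_form F ->
  forall e, F (Defs.rev e) 0%nat 0 = - F e 0%nat (len e).
Proof.
move=> [_ [Ha _]] e. rewrite Ha; last by have := len_pos e; lra.
by rewrite Rminus_0_r.
Qed.

Arguments RInt_F1 {G F}.
Arguments antisym0 {G F}.
Arguments vertex_zero {G F}.

Theorem theorem2p15 (G : wmgraph) (Fw Fe : E G -> nat -> R -> R) :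
  smooth_form Fw -> smooth_form Fe ->
  int_Sigma (dbar_10 Fw) = int_bdry_10 Fw /\
  int_Sigma (d_01 Fe) = int_bdry_01 Fe.
Proof.
move=> Hw He.
have rinj : injective (@Defs.rev G) by apply: (can_inj (@rev_invol G)).
split.
- rewrite /int_Sigma /int_bdry_10 !fsumE.
  set S := \big[Rplus/0]_(e : E G) (INR (wt e) * Fw e 0%nat 0).
  have -> : \big[Rplus/0]_(i | predT i) (INR (wt i) * RInt (dbar_10 Fw i) 0 (len i))
     = S + \big[Rplus/0]_(e : E G) (INR (wt (Defs.rev e)) * Fw (Defs.rev e) 0%nat 0).
    rewrite -big_split /=; apply: eq_bigr => e _.
    have H := is_RInt_opp _ _ _ _ (RInt_F1 Hw e).
    rewrite /dbar_10 (is_RInt_unique _ _ _ _ H) /opp /= antisym0 // wt_rev. ring.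
  have HS : S = \big[Rplus/0]_(e : E G) (INR (wt (Defs.rev e)) * Fw (Defs.rev e) 0%nat 0)
    by rewrite /S (reindex_inj rinj).
  rewrite -HS.
  have -> : / 2 * (S + S) = S by field.
  rewrite /S (partition_big (@tail G) predT) //=.
  rewrite (bigID (@bdry G)) /=.
  rewrite [X in _ + X = _]big1 ?Rplus_0_r; last first.
    move=> v Hv. exact: vertex_zero.
  apply: eq_bigr => v _. by rewrite fsumE.
- rewrite /int_Sigma /int_bdry_01 !fsumE.
  set T := \big[Rplus/0]_(e : E G) (INR (wt e) * Fe e 0%nat (len e)).
  have -> : \big[Rplus/0]_(i | predT i) (INR (wt i) * RInt (d_01 Fe i) 0 (len i))
     = T + \big[Rplus/0]_(e : E G) (INR (wt (Defs.rev e)) * Fe (Defs.rev e) 0%nat (len (Defs.rev e))).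
    rewrite -big_split /=; apply: eq_bigr => e _.
    have H := RInt_F1 He e.
    have H2 := antisym0 He (Defs.rev e). rewrite rev_invol in H2.
    rewrite /d_01 (is_RInt_unique _ _ _ _ H) H2 wt_rev len_rev. ring.
  have HT : T = \big[Rplus/0]_(e : E G) (INR (wt (Defs.rev e)) * Fe (Defs.rev e) 0%nat (len (Defs.rev e)))
    by rewrite /T (reindex_inj rinj).
  rewrite -HT.
  have -> : / 2 * (T + T) = T by field.
  rewrite /T (partition_big (@Defs.head G) predT) //=.
  rewrite (bigID (@bdry G)) /=.
  rewrite [X in _ + X = _]big1 ?Rplus_0_r; last first.
    move=> v Hv.
    rewrite (reindex_inj rinj) /=.
    have -> : \big[Rplus/0]_(j | Defs.head (Defs.rev j) == v)
        (INR (wt (Defs.rev j)) * Fe (Defs.rev j) 0%nat (len (Defs.rev j)))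
      = \big[Rplus/0]_(j | tail j == v) (- (INR (wt j) * Fe j 0%nat 0)).
      apply: eq_big => j; first by rewrite /Defs.head rev_invol.
      move=> _. have H2 := antisym0 He (Defs.rev j). rewrite rev_invol len_rev in H2. rewrite wt_rev len_rev. rewrite H2; ring.
    rewrite big_opp vertex_zero //. ring.
  apply: eq_bigr => v _. by rewrite fsumE.
Qed.
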